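(* Let $Q=ax^2+bxy+cy^2\in\mathcal{Q}_N(d_K)$ and let $P$ be a subgroup of $I_K(\mathfrak{n})$ with $P_{K,1}(\mathfrak{n})\subseteq P\subseteq P_K(\mathfrak{n})$. Then every class $C\in P_K(\mathfrak{n})/P$ can be written as $C=[(u\omega_Q+v)\mathcal{O}_K]$ for some integers $u,v$, not both zero, such that $\gcd(N,\,Q(v,-u))=1$.
   Context: Let $K$ be an imaginary quadratic field with discriminant $d_K$ and ring of integers $\mathcal{O}_K$. Let $N$ be a positive integer and $\mathfrak{n}=N\mathcal{O}_K$. $I_K(\mathfrak{n})$ denotes the group of fractional ideals of $K$ relatively prime to $\mathfrak{n}$, $P_K(\mathfrak{n})$ its subgroup of principal fractional ideals, and $P_{K,1}(\mathfrak{n})=\{\nu\mathcal{O}_K:\nu\in K^*,\ \nu\equiv^*1\pmod{\mathfrak{n}}\}$, where $\equiv^*$ is multiplicative congruence. $\mathcal{Q}(d_K)$ is the set of primitive positive definite binary quadratic forms $ax^2+bxy+cy^2\in\mathbb{Z}[x,y]$ with $b^2-4ac=d_K$, and $\mathcal{Q}_N(d_K)=\{ax^2+bxy+cy^2\in\mathcal{Q}(d_K):\gcd(N,a)=1\}$. For $Q=ax^2+bxy+cy^2\in\mathcal{Q}(d_K)$, $\omega_Q=(-b+\sqrt{d_K})/(2a)$, the root of $Q(x,1)$ in the upper half-plane $\mathbb{H}$. *)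

(* Defs.v *)
(* K = Q(sqrt dK) is realised inside algC. *)
From HB Require Import structures.
From mathcomp Require Import all_boot all_order all_algebra all_field.
Set Implicit Arguments. Unset Strict Implicit. Unset Printing Implicit Defensive.
Import Order.TTheory GRing.Theory Num.Theory.
Local Open Scope ring_scope.

Definition sqfree_nat (n : nat) : Prop :=
  forall p : nat, prime p -> ~~ (p * p %| n)%N.

Definition fund_disc (d : int) : Prop :=
  ((d %% 4)%Z = 1 /\ sqfree_nat `|d|%N) \/
  (exists m : int, d = 4 * m /\ ((m %% 4)%Z = 2 \/ (m %% 4)%Z = 3)
                   /\ sqfree_nat `|m|%N).

(* sqrt(d_K) in algC: for d_K < 0 this is i*sqrt|d_K| (upper half-plane) *)
Definition sqrtd (d : int) : algC := sqrtC (d%:~R).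

(* O_K = Z[tau], tau = (d_K + sqrt d_K)/2 *)
Definition tauK (d : int) : algC := (d%:~R + sqrtd d) / 2%:R.

Definition in_OK (d : int) (z : algC) : Prop :=
  exists a b : int, z = a%:~R + b%:~R * tauK d.

Definition coprime_OK (d : int) (N : nat) (al : algC) : Prop :=
  in_OK d al /\
  exists x y : algC, in_OK d x /\ in_OK d y /\ al * x + N%:R * y = 1.

(* nu O_K is a (principal) fractional ideal in I_K(n):
   nu = alpha/beta with alpha, beta in O_K nonzero, coprime to n *)
Definition in_PKn (d : int) (N : nat) (nu : algC) : Prop :=
  exists al be : algC, coprime_OK d N al /\ coprime_OK d N be /\
    al != 0 /\ be != 0 /\ nu = al / be.

Definition mcong1 (d : int) (N : nat) (nu : algC) : Prop :=
  exists al be : algC, coprime_OK d N al /\ coprime_OK d N be /\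
    al != 0 /\ be != 0 /\ nu = al / be /\ in_OK d ((al - be) / N%:R).

Definition unit_OK (d : int) (e : algC) : Prop :=
  in_OK d e /\ e != 0 /\ in_OK d e^-1.

(* A subgroup P of I_K(n) with P_{K,1}(n) <= P <= P_K(n), encoded by the
   predicate "P nu  <->  nu O_K \in P" on generators nu in K^*. *)
Record admissible_P (d : int) (N : nat) (P : algC -> Prop) : Prop := {
  P_sub  : forall x, P x -> in_PKn d N x;
  P_one  : P 1;
  P_mul  : forall x y, P x -> P y -> P (x * y);
  P_inv  : forall x, P x -> P x^-1;
  P_unit : forall e x, unit_OK d e -> P x -> P (e * x);
  P_cong : forall x, mcong1 d N x -> P x }.

Definition in_QN (d : int) (N : nat) (a b c : int) : Prop :=
  0 < a /\ b ^+ 2 - 4 * a * c = d /\ gcdz (gcdz a b) c = 1 /\ coprimez N%:Z a.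

Definition Qval (a b c x y : int) : int := a * x ^+ 2 + b * x * y + c * y ^+ 2.

Definition omegaQ (d a b : int) : algC := ((- b)%:~R + sqrtd d) / (2 * a%:~R).

(* Main.v *)
Require Import Defs.
From HB Require Import structures.
From mathcomp Require Import all_boot all_order all_algebra all_field.
From mathcomp Require Import ring lra zify.
Import Order.TTheory GRing.Theory Num.Theory.
Local Open Scope ring_scope.

Definition emb (th : algC) (p : int * int) : algC := p.1%:~R + p.2%:~R * th.
Definition pmul (b ac : int) (p q : int * int) : int * int :=
  (p.1 * q.1 - ac * p.2 * q.2, p.1 * q.2 + p.2 * q.1 - b * p.2 * q.2).
Definition pconj (b : int) (p : int * int) : int * int := (p.1 - b * p.2, - p.2).
Definition pnorm (b ac : int) (p : int * int) : int :=
  p.1 ^+ 2 - b * p.1 * p.2 + ac * p.2 ^+ 2.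

Lemma emb_mul th b ac p q : th ^+ 2 + b%:~R * th + ac%:~R = 0 ->
  emb th (pmul b ac p q) = emb th p * emb th q.
Proof.
move=> H.
have E : th ^+ 2 = - (b%:~R * th) - ac%:~R.
  by transitivity (th ^+ 2 - (th ^+ 2 + b%:~R * th + ac%:~R)); [rewrite H subr0 | ring].
case: p q => [x y] [z w]; rewrite /emb /pmul /=.
transitivity (x%:~R * z%:~R + (x%:~R * w%:~R + y%:~R * z%:~R) * th
   + y%:~R * w%:~R * th ^+ 2 : algC); last by ring.
rewrite E; ring.
Qed.

Lemma emb_conj th b ac p : th ^+ 2 + b%:~R * th + ac%:~R = 0 ->
  emb th p * emb th (pconj b p) = (pnorm b ac p)%:~R.
Proof.
move=> H; rewrite -(@emb_mul th b ac p (pconj b p) H); case: p => x y.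
rewrite /emb /pmul /pconj /pnorm /=; ring.
Qed.

Lemma emb_inj th (b : int) (sd : algC) (d : int) :
  th = ((- b)%:~R + sd) / 2 -> sd ^+ 2 = d%:~R -> d < 0 ->
  forall p q, emb th p = emb th q -> p = q.
Proof.
move=> Hth Hs Hd [x y] [z w]; rewrite /emb /= => E.
have Hyw : y = w.
  apply/eqP; apply/negPn/negP => Hne.
  have Hne' : (y - w)%:~R != 0 :> algC by rewrite intr_eq0 subr_eq0.
  have E2 : th * (y - w)%:~R = (z - x)%:~R.
    rewrite !intrB; apply/eqP; rewrite -subr_eq0; apply/eqP.
    transitivity ((x%:~R + y%:~R * th) - (z%:~R + w%:~R * th) : algC); first by ring.
    by rewrite E subrr.
  have Eth : th = (z - x)%:~R / (y - w)%:~R by rewrite -E2 mulfK.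
  have Hsd : sd = 2 * th + b%:~R by rewrite Hth; field.
  have : sd \is Num.real by rewrite Hsd Eth rpredD ?rpredM ?rpredV ?realz ?rpred_nat.
  rewrite realEsqr Hs ler0z => H0. by move: Hd; rewrite ltNge H0.
subst w; congr (_, _); apply/eqP; rewrite -(eqr_int algC).
by move/eqP: E; rewrite (can_eq (addrK _)).
Qed.

Lemma inOK_emb d th (e : int) (Hte : tauK d = th + e%:~R) z :
  in_OK d z <-> exists p, z = emb th p.
Proof.
split.
  by case=> [A [B ->]]; exists (A + B * e, B); rewrite /emb /= Hte; ring.
case=> [[x y] ->]; exists (x - y * e), y; rewrite Hte /emb /=; ring.
Qed.

Lemma norm_cop d (N : nat) th b ac p :
  th ^+ 2 + b%:~R * th + ac%:~R = 0 ->
  (forall z, in_OK d z <-> exists p, z = emb th p) ->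
  coprimez (pnorm b ac p) N%:Z -> coprime_OK d N (emb th p).
Proof.
move=> Hth Hok /coprimezP [[U V] /= H].
split; first by apply/Hok; exists p.
exists (emb th (pconj b p) * U%:~R), V%:~R.
split.
  apply/Hok; exists ((pconj b p).1 * U, (pconj b p).2 * U); rewrite /emb /=; ring.
split.
  apply/Hok; exists (V, 0); rewrite /emb /=; ring.
transitivity ((U * pnorm b ac p + V * N%:Z)%:~R : algC); last by rewrite H.
rewrite mulrA (emb_conj th b ac p Hth); ring.
Qed.

Lemma cop_norm d (N : nat) th b ac z :
  th ^+ 2 + b%:~R * th + ac%:~R = 0 ->
  (forall z, in_OK d z <-> exists p, z = emb th p) ->
  (forall p q, emb th p = emb th q -> p = q) ->
  coprime_OK d N z -> exists p, z = emb th p /\ coprimez (pnorm b ac p) N%:Z.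
Proof.
move=> Hth Hok Hinj [/Hok [p ->] [X [Y [/Hok [x ->] [/Hok [y ->] E]]]]].
exists p; split=> //.
have E1 : emb th p * emb th x = 1 - N%:R * emb th y.
  by apply/eqP; rewrite eq_sym subr_eq E.
idtac.
have E' : pmul b ac p x = (1 - N%:Z * y.1, - (N%:Z * y.2)).
  apply: Hinj; rewrite (emb_mul th b ac p x Hth) E1 /emb /=; ring.
apply/coprimezP; exists (pnorm b ac x, 2 * y.1 - b * y.2 - N%:Z * pnorm b ac y) => /=.
transitivity (pnorm b ac (pmul b ac p x) + N%:Z * (2 * y.1 - b * y.2 - N%:Z * pnorm b ac y)).
  by clear E E1 E'; case: p x => [p1 p2] [x1 x2]; rewrite /pnorm /pmul /=; ring.
rewrite E' /pnorm /=; ring.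
Qed.

Lemma bezout_nz (m : int) (N : nat) : m != 0 -> (0 < N)%N -> coprimez m N%:Z ->
  exists U V : int, U != 0 /\ m * U + N%:Z * V = 1.
Proof.
move=> m0 N0 /coprimezP [[U V] /= H].
have [U0|U0] := eqVneq U 0.
  exists N%:Z, (V - m); split; first by rewrite lt0r_neq0 // ltz_nat.
  by rewrite -H U0; ring.
by exists U, V; split => //; rewrite -H; ring.
Qed.

Lemma cop_shift (M N z : int) : coprimez M N -> coprimez (M - N * z) N.
Proof.
move=> /coprimezP [[U V] /= H]; apply/coprimezP; exists (U, V + U * z) => /=.
by rewrite -H; ring.
Qed.

Lemma pnorm_mul b ac p q : pnorm b ac (pmul b ac p q) = pnorm b ac p * pnorm b ac q.
Proof. case: p q => [x y] [z w]; rewrite /pnorm /pmul /=; ring. Qed.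

Lemma pnorm_conj b ac p : pnorm b ac (pconj b p) = pnorm b ac p.
Proof. case: p => [x y]; rewrite /pnorm /pconj /=; ring. Qed.

Lemma pnorm_scale b ac k p : pnorm b ac (k * p.1, k * p.2) = k ^+ 2 * pnorm b ac p.
Proof. case: p => [x y]; rewrite /pnorm /=; ring. Qed.

Lemma cop_int d (N : nat) th b ac (m : int) :
  th ^+ 2 + b%:~R * th + ac%:~R = 0 ->
  (forall z, in_OK d z <-> exists p, z = emb th p) ->
  coprimez m N%:Z -> coprime_OK d N m%:~R.
Proof.
move=> Hth Hok Hm.
have -> : (m%:~R : algC) = emb th (m, 0) by rewrite /emb /=; ring.
apply: (norm_cop d N th b ac (m, 0) Hth Hok).
have -> : pnorm b ac (m, 0) = m ^+ 2 by rewrite /pnorm /=; ring.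
exact: coprimezXl.
Qed.

Theorem lemma2p2 (dK : int) (N : nat) (a b c : int) (P : algC -> Prop) :
  fund_disc dK -> dK < 0 -> (0 < N)%N ->
  in_QN dK N a b c -> admissible_P dK N P ->
  forall nu : algC, in_PKn dK N nu ->
  exists u v : int, (u != 0 \/ v != 0) /\
    coprimez N%:Z (Qval a b c v (- u)) /\
    P ((u%:~R * omegaQ dK a b + v%:~R) / nu).
Proof.
move=> Hfd Hd0 HN [Ha [Hd [Hg HaN]]] HP nu [al [be [Hal [Hbe [al0 [be0 ->]]]]]].
set s := sqrtd dK.
set th : algC := ((- b)%:~R + s) / 2.
have Hs2 : s ^+ 2 = dK%:~R by rewrite /s /sqrtd sqrtCK.
have Hs2' : s ^+ 2 = b%:~R ^+ 2 - 4 * a%:~R * c%:~R by rewrite Hs2 -Hd; ring.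
have Hth : th ^+ 2 + b%:~R * th + (a * c)%:~R = 0.
  rewrite /th; transitivity ((s ^+ 2 - (b%:~R ^+ 2 - 4 * a%:~R * c%:~R)) / 4 : algC).
    by field.
  by rewrite Hs2' subrr mul0r.
have [e He] : exists e : int, dK + b = 2 * e.
  have Hbb : b * b + b = 2 * ((b * b + b) %/ 2)%Z.
    have := divz_eq b 2. have := modz_ge0 b (isT : (2:int) != 0).
    have := ltz_pmod b (isT : (0:int) < 2). nia.
  exists (((b * b + b) %/ 2)%Z - 2 * a * c).
  by rewrite -Hd mulrBr -Hbb; ring.
have Hte : tauK dK = th + e%:~R.
  have Hde : dK = 2 * e - b by rewrite -He; ring.
  by rewrite /tauK -/s /th Hde; field.
have Hok := @inOK_emb dK th e Hte.
have Hinj := @emb_inj th b s dK erefl Hs2 Hd0.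
have HaN' := HaN.
have [pa [Ea Ca]] := @cop_norm dK N th b (a * c) al Hth Hok Hinj Hal.
have [pb [Eb Cb]] := @cop_norm dK N th b (a * c) be Hth Hok Hinj Hbe.
set mb := pnorm b (a * c) pb.
set bb := emb th (pconj b pb).
have EB : be * bb = mb%:~R by rewrite Eb /bb (emb_conj th b (a * c) pb Hth).
have bb0 : bb != 0.
  apply/eqP => H0; move: be0; rewrite Eb.
  have : pconj b pb = (0, 0) by apply: Hinj; rewrite -/bb H0 /emb /=; ring.
  case: pb {Eb Cb mb bb EB H0} => x y [] /= H1 H2.
  have y0 : y = 0 by rewrite -(opprK y) H2 oppr0.
  move: H1; rewrite y0 mulr0 subr0 => ->.
  by rewrite /emb /= mul0r addr0 eqxx.
have mb0 : mb != 0 by rewrite -(intr_eq0 algC) -EB mulf_neq0.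
have [U [V [U0 HUV]]] := @bezout_nz mb N mb0 HN Cb.
have a0 : a != 0 by rewrite lt0r_neq0.
set k := a * U.
have k0 : k != 0 by rewrite mulf_neq0.
move/coprimezP: HaN => [[a1 a2] /= Ha12].
set t := pmul b (a * c) pa (pconj b pb).
set T := (k * t.1, k * t.2).
set u := k * t.2.
set v0 := a2 * (k * t.1).
have [v [j [Hv Hv0]]] : exists v j : int, v = v0 + N%:Z * j /\ v != 0.
  case: (eqVneq v0 0) => H.
    exists N%:Z, 1; rewrite H; split; first ring.
    by rewrite lt0r_neq0 // ltz_nat.
  by exists v0, 0; split => //; ring.
set y := a1 * k * t.1 - a * j.
set X := (a * v, u).
have HX : X = (T.1 - N%:Z * y, T.2).
  rewrite /X /T /u Hv /v0 /y; clearbody t; rewrite /=; congr (_, _).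
  have Ha2 : a2 * a = 1 - a1 * N%:Z by rewrite -Ha12; ring.
  transitivity (k * t.1 * (a2 * a) + a * N%:Z * j); first ring.
  by rewrite Ha2; ring.
have Ca' : coprimez a N by rewrite coprimez_sym.
have CU : coprimez U N by apply/coprimezP; exists (mb, V) => /=; rewrite -HUV; ring.
have Ck : coprimez k N by rewrite /k coprimezMl Ca' CU.
have CT : coprimez (pnorm b (a * c) T) N.
  rewrite /T pnorm_scale /t pnorm_mul pnorm_conj -/mb !coprimezMl Ca Cb.
  by rewrite Ca' CU.
have CX : coprimez (pnorm b (a * c) X) N.
  rewrite HX.
  have -> : pnorm b (a * c) (T.1 - N%:Z * y, T.2) =
      pnorm b (a * c) T - N%:Z * (2 * T.1 * y - N%:Z * y ^+ 2 - b * y * T.2).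
    by rewrite /pnorm /=; ring.
  exact: cop_shift.
exists u, v; split; first by right.
split.
  have HQ : pnorm b (a * c) X = a * Qval a b c v (- u) by rewrite /pnorm /Qval /X /=; ring.
  by move: CX; rewrite HQ coprimezMl => /andP [_ H]; rewrite coprimez_sym.
set x := u%:~R * omegaQ dK a b + v%:~R.
have a0' : a%:~R != 0 :> algC by rewrite intr_eq0.
have N0 : N%:R != 0 :> algC by rewrite pnatr_eq0 -lt0n.
have Hax : a%:~R * x = emb th X.
  by rewrite /x /omegaQ /emb /X /= -/s /th; field.
have ET : emb th T = k%:~R * al * bb.
  rewrite Ea /bb -mulrA -(emb_mul th b (a * c) pa (pconj b pb) Hth) -/t.
  by clearbody t; rewrite /T /emb /=; ring.
have F1 : P (emb th X / emb th T).
  apply: (P_cong HP); exists (emb th X), (emb th T).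
  split; first exact: (norm_cop dK N th b (a * c) X Hth Hok).
  split; first exact: (norm_cop dK N th b (a * c) T Hth Hok).
  split.
    apply/eqP => H0.
    have : X = (0, 0) by apply: Hinj; rewrite H0 /emb /=; ring.
    by case => /eqP; rewrite mulf_eq0 (negbTE a0) (negbTE Hv0).
  split; first by rewrite ET !mulf_neq0 // intr_eq0.
  split; first by [].
  apply/Hok; exists (- y, 0); rewrite HX /emb /=.
  by clearbody T; field.
have F2 : P ((k * mb)%:~R / a%:~R).
  apply: (P_cong HP); exists ((k * mb)%:~R), a%:~R.
  split; first by apply: (cop_int dK N th b (a * c) _ Hth Hok); rewrite coprimezMl Ck Cb.
  split; first exact: (cop_int dK N th b (a * c) _ Hth Hok).
  split; first by rewrite intr_eq0 mulf_neq0.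
  split; first by [].
  split; first by [].
  apply/Hok; exists (- (a * V), 0); rewrite /emb /=.
  have HmU : mb * U = 1 - N%:Z * V by rewrite -HUV; ring.
  have Hkm : k * mb - a = - (a * V) * N%:Z.
    transitivity (a * (mb * U) - a); first by rewrite /k; ring.
    by rewrite HmU; ring.
  by rewrite -intrB Hkm; field.
have := P_mul HP F1 F2.
suff -> : x / (al / be) = emb th X / emb th T * ((k * mb)%:~R / a%:~R) by [].
rewrite -Hax ET intrM -EB; field.
by rewrite al0 be0 bb0 a0' intr_eq0 k0.
Qed.
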